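(* Let $(Y,X_1,X_2)$ be a random vector with $Y\in\mathbb{R}$, $X_1\in\mathbb{R}^{p_1}$, $X_2\in\mathbb{R}^{p_2}$ ($p_1,p_2$ positive integers), with finite second moments. Use the squared error loss $L(f,(y,x_1,x_2))=(y-f(x_1,x_2))^2$. Let $\beta=(\beta_1,\beta_2)$ with $\beta_1\in\mathbb{R}^{p_1}$, $\beta_2\in\mathbb{R}^{p_2}$, and $f_\beta(x)=x_1'\beta_1+x_2'\beta_2$. Then $$e_{\text{switch}}(f_\beta)-e_{\text{orig}}(f_\beta)=2\,\text{Cov}(Y,X_1)\beta_1-2\beta_2'\,\text{Cov}(X_2,X_1)\beta_1,$$ and, for a sample $\mathbf{y}\in\mathbb{R}^n$, $\mathbf{X}=[\mathbf{X}_1\ \mathbf{X}_2]$ ($n\times(p_1+p_2)$, $n\ge 2$), $$\hat e_{\text{switch}}(f_\beta)=\frac1n\left\{\mathbf{y}'\mathbf{y}-2\begin{bmatrix}\mathbf{X}_1'\mathbf{W}\mathbf{y}\\ \mathbf{X}_2'\mathbf{y}\end{bmatrix}'\beta+\beta'\begin{bmatrix}\mathbf{X}_1'\mathbf{X}_1 & \mathbf{X}_1'\mathbf{W}\mathbf{X}_2\\ \mathbf{X}_2'\mathbf{W}\mathbf{X}_1 & \mathbf{X}_2'\mathbf{X}_2\end{bmatrix}\beta\right\},$$ where $\mathbf{W}:=\frac{1}{n-1}(\mathbf{1}_n\mathbf{1}_n'-\mathbf{I}_n)$, $\mathbf{1}_n$ is the all-ones vector and $\mathbf{I}_n$ the 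identity.
   Context: For a model $f$: $e_{\text{orig}}(f):=\mathbb{E}L(f,(Y,X_1,X_2))$; $e_{\text{switch}}(f):=\mathbb{E}L(f,(Y^{(b)},X_1^{(a)},X_2^{(b)}))$ where $(Y^{(a)},X_1^{(a)},X_2^{(a)})$, $(Y^{(b)},X_1^{(b)},X_2^{(b)})$ are independent copies of $(Y,X_1,X_2)$. For a sample with rows $i=1,\dots,n$ (outcome $\mathbf{y}_{[i]}$, covariate rows $\mathbf{X}_{1[i,\cdot]},\mathbf{X}_{2[i,\cdot]}$): $\hat e_{\text{switch}}(f):=\frac{1}{n(n-1)}\sum_{i=1}^n\sum_{j\ne i}L\{f,(\mathbf{y}_{[j]},\mathbf{X}_{1[i,\cdot]},\mathbf{X}_{2[j,\cdot]})\}$. *)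

(* Defs.v *)
From HB Require Import structures.
From mathcomp Require Import all_boot all_order all_algebra.
From mathcomp Require Import all_classical all_reals all_analysis.
Set Implicit Arguments.
Unset Strict Implicit.
Unset Printing Implicit Defensive.
Import Order.TTheory GRing.Theory Num.Theory.
Local Open Scope ring_scope.

Definition f_lin {R : ringType} {p1 p2 : nat} (b1 : 'cV[R]_p1) (b2 : 'cV[R]_p2)
  (x1 : 'I_p1 -> R) (x2 : 'I_p2 -> R) : R :=
  \sum_(k < p1) x1 k * b1 k 0 + \sum_(k < p2) x2 k * b2 k 0.

Definition sq_loss {R : ringType} {p1 p2 : nat}
  (f : ('I_p1 -> R) -> ('I_p2 -> R) -> R) (y : R) (x1 : 'I_p1 -> R) (x2 : 'I_p2 -> R) : R :=
  (y - f x1 x2) ^+ 2.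

Definition e_orig {d} {T : measurableType d} {R : realType} (P : probability T R)
  {p1 p2 : nat} (f : ('I_p1 -> R) -> ('I_p2 -> R) -> R)
  (Y : T -> R) (X1 : 'I_p1 -> T -> R) (X2 : 'I_p2 -> T -> R) : \bar R :=
  'E_P[fun w => sq_loss f (Y w) (fun k => X1 k w) (fun k => X2 k w)].

(* e_switch(f) = E L(f,(Y^(b),X1^(a),X2^(b))) where copy (a) is the first and
   copy (b) the second coordinate of the product space (T*T, P x P): these are
   two independent copies of (Y,X1,X2). *)
Definition e_switch {d} {T : measurableType d} {R : realType} (P : probability T R)
  {p1 p2 : nat} (f : ('I_p1 -> R) -> ('I_p2 -> R) -> R)
  (Y : T -> R) (X1 : 'I_p1 -> T -> R) (X2 : 'I_p2 -> T -> R) : \bar R :=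
  (\int[(P \x P)%E]_w
     (sq_loss f (Y w.2) (fun k => X1 k w.1) (fun k => X2 k w.2))%:E)%E.

Definition e_switch_hat {R : realFieldType} {n p1 p2 : nat}
  (f : ('I_p1 -> R) -> ('I_p2 -> R) -> R)
  (y : 'cV[R]_n) (X1 : 'M[R]_(n, p1)) (X2 : 'M[R]_(n, p2)) : R :=
  (n%:R * (n%:R - 1))^-1 *
  \sum_(i < n) \sum_(j < n | j != i)
     sq_loss f (y j 0) (fun k => X1 i k) (fun k => X2 j k).

Definition Wmat {R : realFieldType} (n : nat) : 'M[R]_n :=
  (n%:R - 1)^-1 *: (const_mx 1 - 1%:M).

(* Main.v *)
Set Warnings "-all".
Require Import Defs.
From HB Require Import structures.
From mathcomp Require Import all_boot all_order all_algebra.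
From mathcomp Require Import all_classical all_reals all_analysis.
From mathcomp Require Import measurable_realfun.
From mathcomp Require Import ring lra.
Import Order.TTheory GRing.Theory Num.Theory.
Local Open Scope ring_scope.
Lemma tr11 (R : pzRingType) (M : 'M[R]_1) : M^T = M.
Proof. by apply/matrixP => i j; rewrite !ord1 mxE. Qed.

Lemma sum_lin4 (R : comPzRingType) n (c0 c1 c2 c3 c4 : R) (f1 f2 f3 f4 : 'I_n -> R) :
  \sum_(i < n) (c0 + c1 * f1 i + c2 * f2 i + c3 * f3 i + c4 * f4 i)
  = c0 *+ n + c1 * \sum_i f1 i + c2 * \sum_i f2 i + c3 * \sum_i f3 i + c4 * \sum_i f4 i.
Proof. by rewrite !big_split /= -!mulr_sumr sumr_const card_ord. Qed.

Lemma sum_neq (R : zmodType) n (F : 'I_n -> R) i :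
  \sum_(j < n | j != i) F j = \sum_j F j - F i.
Proof. by rewrite [in RHS](bigD1 i) //= [F i + _]addrC addrK. Qed.

Lemma part2 (R : realType) (p1 p2 n : nat) (b1 : 'cV[R]_p1) (b2 : 'cV[R]_p2)
  (y : 'cV[R]_n) (Xs1 : 'M[R]_(n, p1)) (Xs2 : 'M[R]_(n, p2)) :
     (2 <= n)%N ->
     let beta : 'cV[R]_(p1 + p2) := col_mx b1 b2 in
     let W := Wmat n in
     e_switch_hat (f_lin b1 b2) y Xs1 Xs2
     = n%:R^-1 *
       (y^T *m y
        - 2%:R *: (col_mx (Xs1^T *m W *m y) (Xs2^T *m y))^T *m beta
        + beta^T *m block_mx (Xs1^T *m Xs1) (Xs1^T *m W *m Xs2)
                             (Xs2^T *m W *m Xs1) (Xs2^T *m Xs2) *m beta) 0 0.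
Proof.
move=> n2 beta W.
set u := y - Xs2 *m b2.
set v := Xs1 *m b1.
have WT : W^T = W.
  by apply/matrixP => i j; rewrite /W /Wmat !mxE eq_sym.
have -> : y^T *m y
        - 2%:R *: (col_mx (Xs1^T *m W *m y) (Xs2^T *m y))^T *m beta
        + beta^T *m block_mx (Xs1^T *m Xs1) (Xs1^T *m W *m Xs2)
                             (Xs2^T *m W *m Xs1) (Xs2^T *m Xs2) *m beta
   = u^T *m u + v^T *m v - 2%:R *: (v^T *m W *m u).
  rewrite /beta /u /v !tr_col_mx mul_row_block !mul_row_col.
  rewrite !trmx_mul !trmxK -scalemxAl mul_row_col.
  have trB : (y - Xs2 *m b2)^T = y^T - (Xs2 *m b2)^T by apply/matrixP=> i j; rewrite !mxE.
  rewrite trB trmx_mul !mulmxBl !mulmxBr !mulmxDl !mulmxA WT.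
  have t1 : b2^T *m Xs2^T *m y = y^T *m Xs2 *m b2.
    by rewrite -[LHS]tr11 !trmx_mul !trmxK !mulmxA.
  have t2 : y^T *m W *m Xs1 *m b1 = b1^T *m Xs1^T *m W *m y.
    by rewrite -[LHS]tr11 !trmx_mul !trmxK WT !mulmxA.
  have t3 : b2^T *m Xs2^T *m W *m Xs1 *m b1 = b1^T *m Xs1^T *m W *m Xs2 *m b2.
    by rewrite -[LHS]tr11 !trmx_mul !trmxK WT !mulmxA.
  rewrite t1 t2 t3.
  move: (y^T *m y) (y^T *m Xs2 *m b2) (b1^T *m Xs1^T *m W *m y) (b1^T *m Xs1^T *m Xs1 *m b1)
    (b1^T *m Xs1^T *m W *m Xs2 *m b2) (b2^T *m Xs2^T *m Xs2 *m b2) => A B C D E F.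
  apply/matrixP => i j; rewrite !mxE; ring.
have Hf : forall i j, sq_loss (f_lin b1 b2) (y j 0) (fun k => Xs1 i k) (fun k => Xs2 j k)
   = (u j 0 - v i 0) ^+ 2.
  move=> i j; rewrite /sq_loss /f_lin /u /v !mxE; congr (_ ^+ 2).
  ring.
rewrite /e_switch_hat.
under eq_bigr => i _ do under eq_bigr => j _ do rewrite Hf.
clearbody u v.
under eq_bigr => i _ do rewrite sum_neq.
have E1 : forall i, \sum_(j < n) (u j 0 - v i 0) ^+ 2
   = \sum_j (v i 0 ^+ 2 + (- 2 * v i 0) * u j 0 + 1 * (u j 0 * u j 0) + 0 * 0 + 0 * 0).
  by move=> i; apply: eq_bigr => j _; ring.
under eq_bigr => i _ do rewrite E1 sum_lin4.
set Su := \sum_(j < n) u j 0.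
set Su2 := \sum_(j < n) u j 0 * u j 0.
rewrite (eq_bigr (fun i => Su2 + (- 2 * Su) * v i 0 + (n%:R - 1) * (v i 0 * v i 0)
   + (-1) * (u i 0 * u i 0) + 2 * (v i 0 * u i 0))); last first.
  move=> i _; rewrite big1_eq !mulr0 !addr0 mul1r -mulr_natr; ring.
rewrite sum_lin4.
rewrite /W /Wmat -scalemxAr -scalemxAl mulmxBr mulmx1 mulmxBl !mxE.

have e1 : \sum_j u^T 0 j * u j 0 = Su2 by apply: eq_bigr => j _; rewrite mxE.
have e2 : \sum_j v^T 0 j * v j 0 = \sum_i v i 0 * v i 0 by apply: eq_bigr => j _; rewrite mxE.
have e3 : \sum_j v^T 0 j * u j 0 = \sum_i v i 0 * u i 0 by apply: eq_bigr => j _; rewrite mxE.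
have e4 : \sum_j (v^T *m const_mx 1) 0 j * u j 0 = (\sum_i v i 0) * Su.
  rewrite /Su mulr_sumr; apply: eq_bigr => j _; rewrite mxE; congr (_ * _).
  by apply: eq_bigr => i _; rewrite !mxE mulr1.
rewrite e1 e2 e3 e4 -mulr_natr.
have hn : n%:R != 0 :> R by rewrite pnatr_eq0 -lt0n ltnW.
have hn1 : n%:R - 1 != 0 :> R.
  by rewrite subr_eq0 pnatr_eq1 neq_ltn n2 orbT.
rewrite /Su2 /Su; by field; rewrite hn hn1.
Qed.
Lemma LfunS d (T : measurableType d) (R : realType) (P : probability T R) (p : R) (hp : (1 <= p)%R)
  m (F : 'I_m -> T -> R) (c : 'I_m -> R) :
  (forall k, F k \in Lfun P p%:E) -> (fun w => \sum_(k < m) F k w * c k)%R \in Lfun P p%:E.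
Proof.
elim: m F c => [|m IH] F c HF.
  have -> : (fun w => \sum_(k < 0) F k w * c k)%R = cst 0%R.
    by apply/funext => w; rewrite big_ord0.
  exact: Lfun_cst.
have -> : (fun w => \sum_(k < m.+1) F k w * c k)%R =
   ((fun w => \sum_(k < m) F (widen_ord (leqnSn m) k) w * c (widen_ord (leqnSn m) k)) \+
   (c ord_max) \o* F ord_max)%R.
  by apply/funext => w; rewrite big_ord_recr /= mulrC.
apply: (Lfun_addr_closed _ _).2.
  by rewrite lee_fin.
  by apply: IH => k.
by apply: Lfun_scale; rewrite ?lee_fin.
Qed.

Lemma prod_int d (T : measurableType d) (R : realType) (P : probability T R) (h g : T -> R) :
  h \in Lfun P 1 -> g \in Lfun P 1 ->
  (P \x P)%E.-integrable setT (fun w => (h w.1 * g w.2)%:E) /\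
  (\int[P \x P]_w (h w.1 * g w.2)%:E = 'E_P[h] * 'E_P[g])%E.
Proof.
move=> /Lfun1_integrable ih /Lfun1_integrable ig.
have mh : measurable_fun setT h by apply/measurable_EFinP; exact: measurable_int ih.
have mg : measurable_fun setT g by apply/measurable_EFinP; exact: measurable_int ig.
have mf : measurable_fun setT (fun w : T * T => (h w.1 * g w.2)%:E).
  apply/measurable_EFinP; apply: measurable_funM.
    exact: measurableT_comp mh measurable_fst.
  exact: measurableT_comp mg measurable_snd.
have fg : (\int[P]_y `|(g y)%:E| < +oo)%E by move/integrableP: ig => [].
have fh : (\int[P]_y `|(h y)%:E| < +oo)%E by move/integrableP: ih => [].
have int : (P \x P)%E.-integrable setT (fun w => (h w.1 * g w.2)%:E).
  apply: (@integrable12ltyP _ _ _ _ _ P P _ mf).2.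
  under eq_integral => x _.
    under eq_integral => y _ do rewrite /= normrM EFinM.
    rewrite ge0_integralZl //; last by apply/measurable_EFinP; exact: measurableT_comp.
    over.
  rewrite /= ge0_integralZr //; last exact: integral_ge0.
    2: by apply/measurable_EFinP; exact: measurableT_comp.
  by rewrite lte_mul_pinfty // ?integral_ge0 // ge0_fin_numE ?integral_ge0.
split => //.
have eg : (\int[P]_y (g y)%:E = (fine (\int[P]_y (g y)%:E))%:E)%E.
  by rewrite fineK // integrable_fin_num.
rewrite -(integral12_prod_meas1 int) /fubini_F /=.
under eq_integral => x _.
  under eq_integral => y _ do rewrite EFinM.
  rewrite integralZl // eg.
  over.
by rewrite /= integralZr // -eg !unlock.
Qed.

Lemma toE d (T : measurableType d) (R : realType) (P : probability T R) (f : T -> R) :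
  f \in Lfun P 1 -> ('E_P[f] = (fine 'E_P[f])%:E)%E.
Proof. by move=> hf; rewrite fineK // expectation_fin_num. Qed.
Arguments toE {d T R P f}.

Lemma EfS d (T : measurableType d) (R : realType) (P : probability T R)
  m (F : 'I_m -> T -> R) (c : 'I_m -> R) :
  (forall k, F k \in Lfun P 1) ->
  ('E_P[fun w => \sum_(k < m) F k w * c k]%R = (\sum_(k < m) fine ('E_P[F k])%E * c k)%R%:E)%E.
Proof.
elim: m F c => [|m IH] F c HF.
  have -> : (fun w => \sum_(k < 0) F k w * c k)%R = cst 0%R.
    by apply/funext => w; rewrite big_ord0.
  by rewrite expectation_cst big_ord0.
have -> : (fun w => \sum_(k < m.+1) F k w * c k)%R =
   ((fun w => \sum_(k < m) F (widen_ord (leqnSn m) k) w * c (widen_ord (leqnSn m) k)) \+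
   (c ord_max) \o* F ord_max)%R.
  by apply/funext => w; rewrite big_ord_recr.
rewrite expectationD; last 2 first.
- by apply: (@LfunS _ _ _ P 1) => // k.
- by apply: Lfun_scale; rewrite ?lee_fin.
rewrite expectationZl // IH // (toE (HF ord_max)) -EFinM -EFinD big_ord_recr /=.
by rewrite mulrC.
Qed.

Lemma part1 (R : realType) (d : measure_display) (T : measurableType d)
  (P : probability T R) (p1 p2 : nat)
  (Y : T -> R) (X1 : 'I_p1 -> T -> R) (X2 : 'I_p2 -> T -> R)
  (HY : Y \in Lfun P 2%:E)
  (HX1 : forall k, X1 k \in Lfun P 2%:E)
  (HX2 : forall k, X2 k \in Lfun P 2%:E)
  (b1 : 'cV[R]_p1) (b2 : 'cV[R]_p2) :
  (e_switch P (f_lin b1 b2) Y X1 X2 - e_orig P (f_lin b1 b2) Y X1 X2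
   = (2 * \sum_(k < p1) fine (covariance P Y (X1 k)) * b1 k 0
      - 2 * \sum_(j < p2) \sum_(k < p1)
              b2 j 0 * fine (covariance P (X2 j) (X1 k)) * b1 k 0)%:E)%E.
Proof.
pose B := fun w => \sum_(k < p1) X1 k w * b1 k 0.
pose C := fun w => \sum_(k < p2) X2 k w * b2 k 0.
pose A := fun w => Y w - C w.
have fin1 : P setT \is a fin_num by rewrite probability_setT.
have l21 := Lfun_subset12 fin1.
have h12 : (1 <= 2 :> R)%R by rewrite ler1n.
have hB : B \in Lfun P 2%:E by exact: (@LfunS _ _ _ P 2 h12 p1 X1 (fun k => b1 k 0)).
have hC : C \in Lfun P 2%:E by exact: (@LfunS _ _ _ P 2 h12 p2 X2 (fun k => b2 k 0)).
have hA : A \in Lfun P 2%:E.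
  have -> : A = (Y \+ (-1) \o* C)%R by apply/funext => w; rewrite /A /= mulrN1.
  apply: (Lfun_addr_closed _ _).2 => //; rewrite ?lee_fin //.
  all: try by apply: Lfun_scale => //; rewrite lee_fin.
pose Asq := fun w => A w ^+ 2.
pose Bsq := fun w => B w ^+ 2.
have hAsq : Asq \in Lfun P 1 by apply/Lfun1_integrable; exact: Lfun2_integrable_sqr.
have hBsq : Bsq \in Lfun P 1 by apply/Lfun1_integrable; exact: Lfun2_integrable_sqr.
have hone : cst 1%R \in Lfun P 1 by exact: Lfun_cst.
pose m2A := ((-2) \o* A)%R.
have hm2A : m2A \in Lfun P 1 by apply: Lfun_scale => //; exact: l21.
pose AB := (A \* B)%R.
have hAB : AB \in Lfun P 1 by exact: Lfun2_mul_Lfun1.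
pose m2AB := ((-2) \o* AB)%R.
have hm2AB : m2AB \in Lfun P 1 by apply: Lfun_scale.
have Hsw : e_switch P (f_lin b1 b2) Y X1 X2 = ('E_P[Asq] + 'E_P[B] * 'E_P[m2A] + 'E_P[Bsq])%E.
  rewrite /e_switch (eq_integral (fun w => ((cst 1%R w.1 * Asq w.2)%:E + (B w.1 * m2A w.2)%:E)
      + (Bsq w.1 * cst 1%R w.2)%:E)%E); last first.
    move=> w _; rewrite -!EFinD /sq_loss /f_lin /Asq /m2A /Bsq /A /B /C /=; congr (_%:E); ring.
  have [i1 e1] := @prod_int _ _ _ P (cst 1%R) Asq hone hAsq.
  have [i2 e2] := @prod_int _ _ _ P B m2A (l21 _ hB) hm2A.
  have [i3 e3] := @prod_int _ _ _ P Bsq (cst 1%R) hBsq hone.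
  rewrite integralD //; last exact: integrableD.
  by rewrite integralD // e1 e2 e3 expectation_cst mul1e mule1.
have Hor : e_orig P (f_lin b1 b2) Y X1 X2 = ('E_P[Asq] + 'E_P[m2AB] + 'E_P[Bsq])%E.
  rewrite /e_orig (_ : (fun w => _) = ((Asq \+ m2AB) \+ Bsq)%R); last first.
    apply/funext => w; rewrite /sq_loss /f_lin /Asq /m2AB /AB /Bsq /A /B /C /=; ring.
  rewrite expectationD //; last by apply: (Lfun_addr_closed _ _).2.
  by rewrite expectationD.
rewrite Hsw Hor /m2AB /m2A !expectationZl //; last exact: l21.
rewrite (toE hAsq) (toE (l21 _ hB)) (toE (l21 _ hA)) (toE hBsq) (toE hAB).
rewrite -!EFinM -!EFinD; congr (_%:E).
have L1X1 : forall k, X1 k \in Lfun P 1 by move=> k; apply: l21.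
have L1X2 : forall k, X2 k \in Lfun P 1 by move=> k; apply: l21.
have hEB : fine 'E_P[B] = \sum_(k < p1) fine 'E_P[X1 k] * b1 k 0.
  by rewrite /B EfS.
have hEC : fine 'E_P[C] = \sum_(k < p2) fine 'E_P[X2 k] * b2 k 0.
  by rewrite /C EfS.
have hEA : fine 'E_P[A] = fine 'E_P[Y] - \sum_(k < p2) fine 'E_P[X2 k] * b2 k 0.
  rewrite -hEC (_ : A = (Y \- C)%R) // expectationB ?(l21 _ HY) ?(l21 _ hC) //.
  by rewrite (toE (l21 _ HY)) (toE (l21 _ hC)) -EFinB.
have LYX : forall k, (Y * X1 k)%R \in Lfun P 1 by move=> k; exact: Lfun2_mul_Lfun1.
have LXX : forall j k, (X2 j * X1 k)%R \in Lfun P 1 by move=> j k; exact: Lfun2_mul_Lfun1.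
have LXB : forall j, (X2 j \* B)%R \in Lfun P 1 by move=> j; exact: Lfun2_mul_Lfun1.
have hEXB : forall j, fine 'E_P[X2 j \* B] = \sum_(k < p1) fine 'E_P[X2 j * X1 k] * b1 k 0.
  move=> j; rewrite (_ : (X2 j \* B)%R = fun w => \sum_(k < p1) (X2 j * X1 k)%R w * b1 k 0).
    by rewrite EfS.
  by apply/funext => w; rewrite /= /B mulr_sumr; apply: eq_bigr => k _; rewrite mulrA.
have hEAB : fine 'E_P[AB] = \sum_(k < p1) fine 'E_P[Y * X1 k] * b1 k 0
     - \sum_(j < p2) (\sum_(k < p1) fine 'E_P[X2 j * X1 k] * b1 k 0) * b2 j 0.
  rewrite (_ : AB = (fun w => \sum_(k < p1) (Y * X1 k)%R w * b1 k 0) \-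
                    (fun w => \sum_(j < p2) (X2 j \* B)%R w * b2 j 0))%R; last first.
    apply/funext => w; rewrite /AB /A /B /C /= mulrBl mulr_sumr mulr_suml.
    congr (_ - _); apply: eq_bigr => k _ /=; first by rewrite mulrA.
    by rewrite /B; ring.
  rewrite expectationB; last 2 first.
  - exact: (@LfunS _ _ _ P 1).
  - exact: (@LfunS _ _ _ P 1).
  rewrite !EfS //=.
  by congr (_ - _); apply: eq_bigr => j _; rewrite hEXB.
have hcov : forall U V, U \in Lfun P 2%:E -> V \in Lfun P 2%:E ->
   fine (covariance P U V) = fine 'E_P[U * V] - fine 'E_P[U] * fine 'E_P[V].
  move=> U V hU hV.
  have hUV : (U * V)%R \in Lfun P 1 by exact: Lfun2_mul_Lfun1.
  rewrite covarianceE ?(l21 _ hU) ?(l21 _ hV) //.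
  by rewrite (toE (l21 _ hU)) (toE (l21 _ hV)) (toE hUV) -EFinM -EFinB.
have cY := fun k => hcov _ _ HY (HX1 k).
have cX := fun j k => hcov _ _ (HX2 j) (HX1 k).
under eq_bigr => k _ do rewrite cY.
under [X in _ - _ * X]eq_bigr => j _ do under eq_bigr => k _ do rewrite cX.
rewrite hEAB hEA hEB.
set eY := fine 'E_P[Y].
set S1 := \sum_(k < p1) fine 'E_P[X1 k] * b1 k 0.
set S2 := \sum_(k < p2) fine 'E_P[X2 k] * b2 k 0.
have r1 : \sum_(k < p1) (fine 'E_P[(Y * X1 k)%R] - eY * fine 'E_P[X1 k]) * b1 k 0
    = \sum_(k < p1) fine 'E_P[(Y * X1 k)%R] * b1 k 0 - eY * S1.
  rewrite /S1 mulr_sumr -sumrB; apply: eq_bigr => k _; ring.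
have r2 : \sum_(j < p2) \sum_(k < p1)
      b2 j 0 * (fine 'E_P[(X2 j * X1 k)%R] - fine 'E_P[X2 j] * fine 'E_P[X1 k]) * b1 k 0
    = \sum_(j < p2) (\sum_(k < p1) fine 'E_P[(X2 j * X1 k)%R] * b1 k 0) * b2 j 0 - S2 * S1.
  rewrite /S2 mulr_suml -sumrB; apply: eq_bigr => j _.
  rewrite /S1 mulr_sumr mulr_suml -sumrB; apply: eq_bigr => k _; ring.
rewrite r1 r2; ring.
Qed.

Theorem theorem2 (R : realType) (d : measure_display) (T : measurableType d)
  (P : probability T R) (p1 p2 : nat) (hp1 : (0 < p1)%N) (hp2 : (0 < p2)%N)
  (Y : T -> R) (X1 : 'I_p1 -> T -> R) (X2 : 'I_p2 -> T -> R)
  (HY : Y \in Lfun P 2%:E)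
  (HX1 : forall k, X1 k \in Lfun P 2%:E)
  (HX2 : forall k, X2 k \in Lfun P 2%:E)
  (b1 : 'cV[R]_p1) (b2 : 'cV[R]_p2) :
  (e_switch P (f_lin b1 b2) Y X1 X2 - e_orig P (f_lin b1 b2) Y X1 X2
   = (2 * \sum_(k < p1) fine (covariance P Y (X1 k)) * b1 k 0
      - 2 * \sum_(j < p2) \sum_(k < p1)
              b2 j 0 * fine (covariance P (X2 j) (X1 k)) * b1 k 0)%:E)%E
  /\
  (forall (n : nat) (y : 'cV[R]_n) (Xs1 : 'M[R]_(n, p1)) (Xs2 : 'M[R]_(n, p2)),
     (2 <= n)%N ->
     let beta : 'cV[R]_(p1 + p2) := col_mx b1 b2 in
     let W := Wmat n in
     e_switch_hat (f_lin b1 b2) y Xs1 Xs2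
     = n%:R^-1 *
       (y^T *m y
        - 2%:R *: (col_mx (Xs1^T *m W *m y) (Xs2^T *m y))^T *m beta
        + beta^T *m block_mx (Xs1^T *m Xs1) (Xs1^T *m W *m Xs2)
                             (Xs2^T *m W *m Xs1) (Xs2^T *m Xs2) *m beta) 0 0).
Proof.
split; first exact: part1.
by move=> n y Xs1 Xs2 hn; apply: part2.
Qed.
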